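(* Let $G$ be a graph and $n\ge 0$ an integer. Then $\operatorname{col}_{ve}(G)\ge n+4$ if and only if, in the vertex-edge marking game on $G$, Bob has a strategy guaranteeing that, at the start of one of his turns, there is an $n$-free path.
   Context: The vertex-edge marking game on a graph $G=(V,E)$ (finite or infinite) is played by Alice, who marks vertices, and Bob, who marks edges. Initially nothing is marked. The game proceeds in rounds $r=1,2,\dots$; in each round Alice first marks one unmarked vertex, then Bob marks one unmarked edge. For a finite graph the game ends when either player has no move; for an infinite graph it continues forever. After round $r$, the vertex score of $v$ is $0$ if $v$ is marked, and otherwise the number of marked edges incident to $v$. The $r$-round score is the supremum over $v\in V$ of the vertex scores after round $r$, and the final score of the game is the supremum of the $r$-round scores over all rounds. Bob has a winning strategy for score $s$ if, whatever Alice plays, Bob can force the final score to be at least $s$. The vertex-edge coloring number is $\operatorname{col}_{ve}(G)=\sup\{s : \text{Bob has a winning strategy for score } s\}+1$. In a position of the game, an $n$-free path is a path $P$ in $G$ with vertex sequence $v_0,\dots,v_k$, $k\ge 2$, such that: the first and last edges $v_0v_1$ and $v_{k-1}v_k$ are marked; the interior vertices $v_1,\dots,v_{k-1}$ are unmarked; and each interior vertex is incident to at least $n+1$ edges not in $P$, at least $n$ of which are marked. *)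

(* Defs.v *)
From mathcomp Require Import all_boot all_order all_algebra.
From mathcomp Require Import all_classical all_reals ereal.
From mathcomp Require Import Rstruct.
From Stdlib Require Import List.

Set Implicit Arguments.
Unset Strict Implicit.
Unset Printing Implicit Defensive.

Import Order.TTheory GRing.Theory Num.Theory.

Record sgraph := SGraph {
  gV :> Type;
  adj : gV -> gV -> Prop;
  adj_sym : forall u v, adj u v -> adj v u;
  adj_irr : forall v, ~ adj v v }.

Section Game.
Variable G : sgraph.

(* A move: Alice marks a vertex, Bob marks the edge {u,v}. *)
Inductive move := MA of G | MB of G & G.

Definition history := list move.

Definition vmarked (h : history) (v : G) : Prop := In (MA v) h.

Definition emarked (h : history) (u v : G) : Prop := In (MB u v) h \/ In (MB v u) h.

Definition alice_can (h : history) : Prop := exists v : G, ~ vmarked h v.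
Definition bob_can (h : history) : Prop :=
  exists u v : G, adj u v /\ ~ emarked h u v.

(* A play: p k is the k-th move (k = 0,1,2,...), Alice moving at even k and
   Bob at odd k; p k = None means the game has ended (the player to move had
   no legal move). *)
Definition play := nat -> option move.

Fixpoint hist (p : play) (k : nat) : history :=
  match k with
  | 0 => nil
  | k'.+1 => hist p k' ++ (if p k' is Some m then m :: nil else nil)
  end.

Definition valid_play (p : play) : Prop :=
  forall k,
    (p k = None -> p k.+1 = None) /\
    ((forall j, j < k -> p j <> None) ->
     if odd k then
       match p k with
       | Some (MB u v) => adj u v /\ ~ emarked (hist p k) u v
       | Some (MA _) => False
       | None => ~ bob_can (hist p k)
       end
     else
       match p k with
       | Some (MA v) => ~ vmarked (hist p k) v
       | Some (MB _ _) => False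
       | None => ~ alice_can (hist p k)
       end).

Definition bob_strategy := history -> G * G.

Definition bob_legal (sigma : bob_strategy) : Prop :=
  forall h, bob_can h -> adj (sigma h).1 (sigma h).2 /\ ~ emarked h (sigma h).1 (sigma h).2.

Definition consistent (sigma : bob_strategy) (p : play) : Prop :=
  forall k u v, odd k -> p k = Some (MB u v) -> sigma (hist p k) = (u, v).

Definition vscore_ge (h : history) (v : G) (s : nat) : Prop :=
  s = 0 \/
  (~ vmarked h v /\
   exists f : 'I_s -> G, injective f /\ forall i, adj v (f i) /\ emarked h v (f i)).

(* the final score of the play is at least s: some r-round score is >= s *)
Definition final_score_ge (p : play) (s : nat) : Prop :=
  exists r (v : G), vscore_ge (hist p (2 * r)) v s.

Definition bob_wins (s : nat) : Prop :=
  exists sigma : bob_strategy, bob_legal sigma /\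
    forall p, valid_play p -> consistent sigma p -> final_score_ge p s.

Definition col_ve : \bar Rdefinitions.R :=
  (ereal_sup [set ((s%:R)%R : Rdefinitions.R)%:E | s in [set s : nat | bob_wins s]] + 1)%E.

Definition on_path (f : nat -> G) (k : nat) (a b : G) : Prop :=
  exists i, i < k /\ ((a = f i /\ b = f i.+1) \/ (a = f i.+1 /\ b = f i)).

Definition nfree_path (h : history) (n : nat) : Prop :=
  exists (k : nat) (f : nat -> G),
    2 <= k /\
    (forall i j, i <= k -> j <= k -> f i = f j -> i = j) /\
    (forall i, i < k -> adj (f i) (f i.+1)) /\
    emarked h (f 0) (f 1) /\ emarked h (f k.-1) (f k) /\
    (forall i, 0 < i < k ->
       ~ vmarked h (f i) /\
       (exists g : 'I_n.+1 -> G, injective g /\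
          forall j, adj (f i) (g j) /\ ~ on_path f k (f i) (g j)) /\
       (exists g : 'I_n -> G, injective g /\
          forall j, adj (f i) (g j) /\ ~ on_path f k (f i) (g j) /\ emarked h (f i) (g j))).

(* Bob can guarantee that at the start of one of his turns (k odd, Alice
   having made her move of that round) there is an n-free path. *)
Definition bob_forces_nfree (n : nat) : Prop :=
  exists sigma : bob_strategy, bob_legal sigma /\
    forall p, valid_play p -> consistent sigma p ->
      exists k, odd k /\ p k.-1 <> None /\ nfree_path (hist p k) n.

End Game.

(* Main.v *)
Require Import Defs.
From mathcomp Require Import all_boot all_order all_algebra.
From mathcomp Require Import all_classical all_reals ereal.
From mathcomp Require Import Rstruct.
From mathcomp Require Import zify lra.
From Stdlib Require Import List.
Import Order.TTheory GRing.Theory Num.Theory.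
Set Implicit Arguments. Unset Strict Implicit. Unset Printing Implicit Defensive.

Section Game2.
Variable G : sgraph.
Variable n : nat.

Definition ext m (g : 'I_m -> G) (d : G) (j : nat) : G :=
  if @insub nat (fun x => x < m) 'I_m j is Some o then g o else d.

Lemma ext_lt m g d j (H : j < m) : @ext m g d j = g (Ordinal H).
Proof. by rewrite /ext insubT. Qed.

Lemma ext_inj m (g : 'I_m -> G) d : injective g ->
  forall i j, i < m -> j < m -> ext g d i = ext g d j -> i = j.
Proof.
move=> gi i j Hi Hj; rewrite (ext_lt _ _ Hi) (ext_lt _ _ Hj) => /gi.
by move/(congr1 val).
Qed.

Lemma emarked_sym (h : history G) u v : emarked h u v -> emarked h v u.
Proof. by case=> H; [right|left]. Qed.

Lemma adj_neq (u v : G) : adj u v -> u <> v.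
Proof. by move=> a E; subst; exact: adj_irr a. Qed.

Lemma fam_of (h : history G) (v : G) s (F : nat -> G) :
  (forall i j, i < s -> j < s -> F i = F j -> i = j) ->
  (forall i, i < s -> adj v (F i) /\ emarked h v (F i)) ->
  exists f : 'I_s -> G, injective f /\ forall i, adj v (f i) /\ emarked h v (f i).
Proof.
move=> Fi FP; exists (fun i => F (val i)); split.
  move=> i j E; apply: val_inj; exact: (Fi _ _ (ltn_ord i) (ltn_ord j) E).
by move=> i; exact: FP (ltn_ord i).
Qed.

Definition sw e j := if j == e then n.+2 else if j == n.+2 then e else j.

Lemma sw_lt e j : e < n + 3 -> j < n + 3 -> sw e j < n + 3.
Proof. rewrite /sw; case: (j =P e); case: (j =P n.+2); lia. Qed.

Lemma sw_inj e i j : e < n + 3 -> i < n + 3 -> j < n + 3 -> sw e i = sw e j -> i = j.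
Proof. rewrite /sw; case: (i =P e); case: (i =P n.+2); case: (j =P e); case: (j =P n.+2); lia. Qed.

Lemma sw_ne e j : e < n + 3 -> j < n.+2 -> sw e j <> e.
Proof. rewrite /sw; case: (j =P e); case: (j =P n.+2); lia. Qed.

Lemma score_nfree (h : history G) (o : option (move G)) v :
  vscore_ge (h ++ (if o is Some m then m :: nil else nil)) v (n + 3) ->
  nfree_path h n.
Proof.
case=> [|[nv [f [fi fP]]]]; first by rewrite addn3.
have nvh : ~ vmarked h v by move=> H; apply: nv; apply: in_or_app; left.
have He : exists e, e < n + 3 /\ forall i : 'I_(n+3), val i != e -> emarked h v (f i).
  case: (pselect (exists i, ~ emarked h v (f i))) => [[i0 Hi0]|Hno].
    exists (val i0); split; first exact: ltn_ord.
    move=> i Ni; apply: contrapT => Hi.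
    have key : forall j, ~ emarked h v (f j) -> 
       o = Some (MB v (f j)) \/ o = Some (MB (f j) v).
      move=> j Hj; have [_ [H|H]] := fP j; case: (in_app_or _ _ _ H) => {}H.
      - by case: Hj; left.
      - by move: H; case: o {nv fP Hi0} => [m|] //= [->|[]]; left.
      - by case: Hj; right.
      - by move: H; case: o {nv fP Hi0} => [m|] //= [->|[]]; right.
    have fne : forall j, f j <> v by move=> j E; have [a _] := fP j; rewrite E in a; exact: adj_irr a.
    have : f i = f i0.
      case: (key _ Hi) => E1; case: (key _ Hi0) => E2; rewrite E1 in E2; case: E2 => //.
      1,2: by congruence.
    move=> E; have E' := fi _ _ E; by rewrite E' eqxx in Ni.
  exists (n.+2); split; first by rewrite addn3.
  by move=> i _; apply: contrapT => H; apply: Hno; exists i.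
case: He => e [He1 He2].
pose F j := ext f v (sw e j).
have FI : forall i j, i < n + 3 -> j < n + 3 -> F i = F j -> i = j.
  move=> i j Hi Hj E; apply: (sw_inj He1 Hi Hj).
  exact: (ext_inj fi (sw_lt He1 Hi) (sw_lt He1 Hj) E).
have FA : forall j, j < n + 3 -> adj v (F j).
  by move=> j Hj; rewrite /F (ext_lt _ _ (sw_lt He1 Hj)); case: (fP (Ordinal (sw_lt He1 Hj))).
have FM : forall j, j < n.+2 -> emarked h v (F j).
  move=> j Hj; have Hj' : j < n + 3 by lia.
  rewrite /F (ext_lt _ _ (sw_lt He1 Hj')); apply: He2 => /=; apply/eqP; exact: sw_ne.
have Fv : forall j, j < n + 3 -> F j <> v.
  by move=> j Hj E; have := FA j Hj; rewrite E; apply: adj_irr.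
have h0 : 0 < n + 3 by rewrite addn3.
have h1 : 1 < n + 3 by rewrite addn3.
have h0' : 0 < n.+2 by [].
have h1' : 1 < n.+2 by [].
pose P i := match i with 0 => F 0 | 1 => v | _ => F 1 end.
have onP : forall b, on_path P 2 v b -> b = F 0 \/ b = F 1.
  move=> b [[|[|i]] [Hi [[E1 E2]|[E1 E2]]]] //; rewrite /P /= in E1 E2.
  - by exfalso; apply: (Fv 0 h0); rewrite -E1.
  - by left.
  - by right.
  - by exfalso; apply: (Fv 1 h1); rewrite -E1.
exists 2, P; split => //; split.
  move=> [|[|[|i]]] [|[|[|j]]] //= _ _; try (move=> E; exfalso).
  - by apply: (Fv 0 h0).
  - by have := FI 0 1 h0 h1 E.
  - by apply: (Fv 0 h0); rewrite E.
  - by apply: (Fv 1 h1); rewrite E.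
  - by have := FI 1 0 h1 h0 E.
  - by apply: (Fv 1 h1).
split.
  move=> [|[|i]] //= _; first exact: adj_sym (FA 0 h0).
  exact: FA.
split; first exact: emarked_sym (FM 0 h0').
split; first exact: FM 1 h1'.
move=> [|[|i]] //= _; split => //; split.
- have Hlt : forall j : 'I_n.+1, (nat_of_ord j).+2 < n + 3.
    by move=> j; have := ltn_ord j; lia.
  exists (fun j : 'I_n.+1 => F (nat_of_ord j).+2); split.
    by move=> i j E; apply: val_inj; case: (FI _ _ (Hlt i) (Hlt j) E).
  move=> j; split; first exact: FA.
  by move/onP => [] E; [have := FI _ _ (Hlt j) h0 E | have := FI _ _ (Hlt j) h1 E].
- have Hlt : forall j : 'I_n, (nat_of_ord j).+2 < n + 3.
    by move=> j; have := ltn_ord j; lia.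
  exists (fun j : 'I_n => F (nat_of_ord j).+2); split.
    by move=> i j E; apply: val_inj; case: (FI _ _ (Hlt i) (Hlt j) E).
  move=> j; split; first exact: FA.
  split; last by apply: FM; rewrite !ltnS.
  by move/onP => [] E; [have := FI _ _ (Hlt j) h0 E | have := FI _ _ (Hlt j) h1 E].
Qed.

Lemma wins_forces : bob_wins G (n + 3) -> bob_forces_nfree G n.
Proof.
move=> [sg [L W]]; exists sg; split => // p vp cp.
have [r [v H]] := W p vp cp.
elim: r v H => [|r IH] v H.
  case: H => [|[_ [f [_ fP]]]]; first by rewrite addn3.
  have h0 : 0 < n + 3 by rewrite addn3.
  by have [_ [[]|[]]] := fP (Ordinal h0).
move: H; rewrite mulnS add2n => H.
case E: (p (2 * r)) => [m|].
  exists (2 * r).+1; split; first by rewrite /= mul2n odd_double.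
  split; first by rewrite /= E.
  exact: (@score_nfree _ (p (2 * r).+1) v H).
have E2 : p (2 * r).+1 = None by apply: (vp (2 * r)).1.
apply: (IH v); move: H => /=; by rewrite E E2 !app_nil_r.
Qed.

Definition nfp (h : history G) (k : nat) (f : nat -> G) : Prop :=
    2 <= k /\
    (forall i j, i <= k -> j <= k -> f i = f j -> i = j) /\
    (forall i, i < k -> adj (f i) (f i.+1)) /\
    emarked h (f 0) (f 1) /\ emarked h (f k.-1) (f k) /\
    (forall i, 0 < i < k ->
       ~ vmarked h (f i) /\
       (exists g : 'I_n.+1 -> G, injective g /\
          forall j, adj (f i) (g j) /\ ~ on_path f k (f i) (g j)) /\
       (exists g : 'I_n -> G, injective g /\
          forall j, adj (f i) (g j) /\ ~ on_path f k (f i) (g j) /\ emarked h (f i) (g j))).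

Lemma nfreeE h : nfree_path h n <-> exists k f, nfp h k f.
Proof. by []. Qed.

Definition hsub (h h' : history G) := forall x, In x h -> In x h'.

Lemma vm_sub h h' x : hsub h h' -> vmarked h x -> vmarked h' x.
Proof. by move=> S; apply: S. Qed.

Lemma em_sub h h' x y : hsub h h' -> emarked h x y -> emarked h' x y.
Proof. by move=> S [H|H]; [left|right]; apply: S. Qed.

Lemma on_path_mono (f : nat -> G) k k' a b : k <= k' -> on_path f k a b -> on_path f k' a b.
Proof. move=> le [i [Hi H]]; exists i; split => //; exact: leq_trans Hi le. Qed.

Lemma nfp_restrict2 h h' m f : nfp h m f -> hsub h h' ->
  emarked h' (f 1) (f 2) -> ~ vmarked h' (f 1) -> nfp h' 2 f.
Proof.
move=> [m2 [fi [fa [e0 [e1 fin]]]]] S e12 nv.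
split => //; split.
  by move=> i j Hi Hj; apply: fi; [exact: leq_trans Hi m2|exact: leq_trans Hj m2].
split.
  by move=> i Hi; apply: fa; exact: leq_trans Hi m2.
split; first exact: em_sub e0.
split => //.
move=> [|[|i]] // _.
have [_ [[g1 [g1i g1P]] [g2 [g2i g2P]]]] := fin 1 (m2 : 0 < 1 < m).
split => //; split.
  exists g1; split => // j; have [a na] := g1P j; split => // op; apply: na.
  exact: on_path_mono op.
exists g2; split => // j; have [a [na em]] := g2P j; split => //; split; last exact: em_sub em.
move=> op; apply: na; exact: on_path_mono op.
Qed.

Lemma on_path_shift (f : nat -> G) k a b : on_path (fun i => f i.+1) k.-1 a b -> on_path f k a b.
Proof. move=> [i [Hi H]]; exists i.+1; split => //; move: Hi; case: k => //. Qed.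

Lemma nfp_shift h h' m f : nfp h m f -> 2 < m -> hsub h h' ->
  emarked h' (f 1) (f 2) -> (forall x, vmarked h' x -> vmarked h x \/ x = f 1) ->
  nfp h' m.-1 (fun i => f i.+1).
Proof.
move=> [m2 [fi [fa [e0 [e1 fin]]]]] m3 S e12 vmh.
split; first by lia.
split.
  move=> i j Hi Hj E; have : i.+1 = j.+1 by apply: fi => //; lia.
  by case.
split.
  move=> i Hi; apply: fa; lia.
split => //=.
split.
  have -> : m.-1.-1.+1 = m.-1 by lia.
  have -> : m.-1.+1 = m by lia.
  exact: em_sub e1.
move=> i /andP [i0 im].
have Hi : 0 < i.+1 < m by apply/andP; split => //; lia.
have [nv [[g1 [g1i g1P]] [g2 [g2i g2P]]]] := fin i.+1 Hi.
split.
  move/vmh => [//|E].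
  have : i.+1 = 1 by apply: fi => //; lia.
  by case=> E'; rewrite E' in i0.
split.
  exists g1; split => // j; have [a na] := g1P j; split => // op; apply: na.
  exact: on_path_shift op.
exists g2; split => // j; have [a [na em]] := g2P j; split => //; split; last exact: em_sub em.
move=> op; apply: na; exact: on_path_shift op.
Qed.

Lemma inapp (x : move G) (l1 l2 : list (move G)) : In x (l1 ++ l2) -> In x l1 \/ In x l2.
Proof. exact: in_app_or. Qed.

Definition consf (a : G) (F : nat -> G) (i : nat) : G :=
  match i with 0 => a | i'.+1 => F i' end.

Lemma consf_inj a F s : (forall i j, i < s -> j < s -> F i = F j -> i = j) ->
  (forall i, i < s -> F i <> a) ->
  forall i j, i < s.+1 -> j < s.+1 -> consf a F i = consf a F j -> i = j.
Proof.
move=> Fi Fa [|i] [|j] //= Hi Hj E.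
- by exfalso; apply: (Fa j Hj); rewrite E.
- by exfalso; apply: (Fa i Hi); rewrite E.
- by rewrite (Fi i j Hi Hj E).
Qed.

Lemma consf_P (P : G -> Prop) a F s : P a -> (forall i, i < s -> P (F i)) ->
  forall i, i < s.+1 -> P (consf a F i).
Proof. by move=> Pa PF [|i] //= Hi; apply: PF. Qed.

Lemma ext_P m (g : 'I_m -> G) d (P : G -> Prop) : (forall x, P (g x)) ->
  forall i, i < m -> P (ext g d i).
Proof. by move=> Pg i Hi; rewrite (ext_lt _ _ Hi). Qed.

Lemma offpath (f : nat -> G) k b : 1 < k -> ~ on_path f k (f 1) b -> b <> f 0 /\ b <> f 2.
Proof.
move=> k1 np; split => E; apply: np.
  by exists 0; split; [exact: ltnW | right].
by exists 1; split => //; left.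
Qed.

Lemma half_odd k : odd k -> 2 * (k.+1)./2 = k.+1.
Proof. by move=> Ok; have := odd_double_half k.+1; rewrite /= Ok /= add0n mul2n. Qed.


Section Strat.
Variable sg : bob_strategy G.

Definition minlen (h : history G) : nat :=
  match pselect (exists k, `[< exists f, nfp h k f >]) with
  | left ex => ex_minn ex
  | right _ => 0
  end.

Lemma minlenP h : (exists k f, nfp h k f) ->
  (exists f, nfp h (minlen h) f) /\ forall k f, nfp h k f -> minlen h <= k.
Proof.
move=> [k [f H]]; rewrite /minlen; case: pselect => [ex|nex].
  case: ex_minnP => m /asboolP Pm Hmin; split => // k' f' H'.
  by apply: Hmin; apply/asboolP; exists f'.
by exfalso; apply: nex; exists k; apply/asboolP; exists f.
Qed.

Definition Cw (h : history G) (f : nat -> G) (w : G) : Prop :=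
  adj (f 1) w /\ w <> f 0 /\ w <> f 2 /\ ~ emarked h (f 1) w.

Definition act (h : history G) (f : nat -> G) : G * G :=
  if minlen h == 2 then
    match pselect (exists w, Cw h f w) with
    | left ew => (f 1, proj1_sig (cid ew))
    | right _ => sg h
    end
  else (f 1, f 2).

Definition strat (h : history G) : G * G :=
  match pselect (exists f, nfp h (minlen h) f) with
  | left e => act h (proj1_sig (cid e))
  | right _ => sg h
  end.

Lemma strat_none h : ~ (exists k f, nfp h k f) -> strat h = sg h.
Proof.
move=> N; rewrite /strat; case: pselect => // [[f H]].
by exfalso; apply: N; exists (minlen h), f.
Qed.

Lemma strat_some h : (exists k f, nfp h k f) ->
  exists f, nfp h (minlen h) f /\ strat h = act h f.
Proof.
move=> E; rewrite /strat; case: pselect => [e|ne].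
  by case: (cid e) => f Hf /=; exists f.
by exfalso; apply: ne; case: (minlenP E).
Qed.

Lemma act2 h f : minlen h = 2 ->
  (exists w, Cw h f w /\ act h f = (f 1, w)) \/
  ((forall w, ~ Cw h f w) /\ act h f = sg h).
Proof.
move=> E; rewrite /act E eqxx; case: pselect => [ew|new].
  by left; case: (cid ew) => w Hw /=; exists w.
by right; split => // w Hw; apply: new; exists w.
Qed.

Lemma actn2 h f : minlen h <> 2 -> act h f = (f 1, f 2).
Proof. by move=> E; rewrite /act; case: eqP. Qed.

Lemma min_gt2 h f : nfp h (minlen h) f -> minlen h <> 2 ->
  2 < minlen h /\ adj (f 1) (f 2) /\ ~ emarked h (f 1) (f 2).
Proof.
move=> H N; have [m2 [_ [fa [_ [_ fin]]]]] := H.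
have m3 : 2 < minlen h by rewrite ltn_neqAle m2 andbT; apply/eqP => E; apply: N.
split => //; split; first by apply: fa; exact: ltnW.
move=> em.
have H2 := nfp_restrict2 H (fun x (y : In x h) => y) em (fin 1 (m2 : 0 < 1 < minlen h)).1.
have [_ Hmin] := minlenP (ex_intro _ 2 (ex_intro _ f H2)).
by have := Hmin _ _ H2; rewrite leqNgt m3.
Qed.

Lemma strat_legal : bob_legal sg -> bob_legal strat.
Proof.
move=> L h bc.
case: (pselect (exists k f, nfp h k f)) => [E|NE]; last by rewrite strat_none //; apply: L.
have [f [Hf ->]] := strat_some E.
case: (eqVneq (minlen h) 2) => [E2|N2].
  case: (act2 f E2) => [[w [[a [_ [_ nm]]] ->]]|[_ ->]] //; exact: L.
have N2' : minlen h <> 2 by apply/eqP.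
have [_ [a nm]] := min_gt2 Hf N2'.
by rewrite actn2.
Qed.

Section Play.
Variable p : play G.
Hypothesis vp : valid_play p.
Hypothesis cp : consistent strat p.

Definition defined k := forall j, j < k -> p j <> None.

Lemma none_prop j i : p j = None -> j <= i -> p i = None.
Proof.
move=> E; elim: i => [|i IH]; first by rewrite leqn0 => /eqP Ej; rewrite -Ej.
rewrite leq_eqVlt => /orP [/eqP <- //|]; rewrite ltnS => /IH; exact: (vp i).1.
Qed.

Lemma defined_S k : defined k -> p k <> None -> defined k.+1.
Proof.
move=> D N j; rewrite ltnS leq_eqVlt => /orP [/eqP -> //|]; exact: D.
Qed.

Lemma bob_move k : odd k -> defined k -> bob_can (hist p k) ->
  exists u v, p k = Some (MB u v) /\ strat (hist p k) = (u, v).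
Proof.
move=> Ok D bc; have := (vp k).2 D; rewrite Ok.
case E: (p k) => [[a|u v]|] //.
  by move=> _; exists u, v; split => //; exact: cp E.
Qed.

Lemma bob_notA k a : odd k -> defined k -> p k <> Some (MA a).
Proof. by move=> Ok D E; have := (vp k).2 D; rewrite Ok E. Qed.

Lemma alice_move k : ~~ odd k -> defined k -> alice_can (hist p k) ->
  exists a, p k = Some (MA a) /\ ~ vmarked (hist p k) a.
Proof.
move=> Ok D ac; have := (vp k).2 D; rewrite (negbTE Ok).
case E: (p k) => [[a|u v]|] //.
by move=> H; exists a.
Qed.

Lemma final_at k v : odd k -> vscore_ge (hist p k.+1) v (n + 3) -> final_score_ge p (n + 3).
Proof. by move=> Ok H; exists (k.+1)./2, v; rewrite half_odd. Qed.

Lemma main_ind m k f0 : odd k -> defined k -> nfp (hist p k) m f0 -> final_score_ge p (n + 3).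
Proof.
elim/ltn_ind: m k f0 => m IH k f0 Ok Dk H0.
set h := hist p k.
have E : exists k f, nfp h k f by exists m, f0.
have [f [Hf Hs]] := strat_some E.
have [_ Hmin] := minlenP E.
have Hle := Hmin _ _ H0.
have [m2 [fi [fa [e0 [e1 fin]]]]] := Hf.
have [nv1 [[g1 [g1i g1P]] [g2 [g2i g2P]]]] := fin 1 (m2 : 0 < 1 < minlen h).
have h3 : n + 3 = n.+3 by rewrite addn3.
case: (eqVneq (minlen h) 2) => [E2|N2].
  rewrite E2 /= in e1.
  have n02 : f 0 <> f 2 by move=> E02; have := fi 0 2 erefl; rewrite E2 => /(_ (leqnn 2) E02).
  case: (act2 f E2) => [[w [[aw [w0 [w2 nw]]] Ha]]|[nC Ha]].
  - have bc : bob_can (hist p k) by exists (f 1), w.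
    have [u [v [Pk Su]]] := bob_move Ok Dk bc.
    rewrite -/h Hs Ha in Su; case: Su => Eu Ev; subst u v.
    apply: (@final_at k (f 1) Ok); right.
    have Hk1 : hist p k.+1 = h ++ (MB (f 1) w :: nil) by rewrite /= Pk.
    have S : hsub h (hist p k.+1) by rewrite Hk1 => x Hx; apply: in_or_app; left.
    split.
      by rewrite Hk1 => /inapp [//|[]].
    apply: (@fam_of _ _ _ (consf (f 0) (consf (f 2) (consf w (ext g2 (f 0)))))).
      rewrite h3; apply: consf_inj; [apply: consf_inj; [apply: consf_inj|]|].
      + exact: ext_inj.
      + apply: (@ext_P _ _ _ (fun x => x <> w)) => x E'; have [_ [_ em]] := g2P x; apply: nw; by rewrite -E'.
      + apply: (@consf_P (fun x => x <> f 2)) => //; apply: (@ext_P _ _ _ (fun x => x <> f 2)) => x; have [_ [np _]] := g2P x.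
        exact: (offpath (m2 : 1 < minlen h) np).2.
      + apply: (@consf_P (fun x => x <> f 0)) => //; first by move=> E'; apply: n02; rewrite E'.
        apply: (@consf_P (fun x => x <> f 0)) => //.
        apply: (@ext_P _ _ _ (fun x => x <> f 0)) => x; have [_ [np _]] := g2P x.
        exact: (offpath (m2 : 1 < minlen h) np).1.
    rewrite h3; apply: (@consf_P (fun x => adj (f 1) x /\ emarked (hist p k.+1) (f 1) x)).
      by split; [apply: adj_sym; apply: fa; exact: ltnW | apply: em_sub S _; apply: emarked_sym].
    apply: (@consf_P (fun x => adj (f 1) x /\ emarked (hist p k.+1) (f 1) x)); first by split; [apply: fa; rewrite E2|apply: em_sub S _].
    apply: (@consf_P (fun x => adj (f 1) x /\ emarked (hist p k.+1) (f 1) x)); first by split => //; rewrite Hk1; left; apply: in_or_app; right; left.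
    apply: (@ext_P _ _ _ (fun x => adj (f 1) x /\ emarked (hist p k.+1) (f 1) x)) => x; have [a [_ em]] := g2P x; split => //; exact: em_sub S _.
  - have Hk1 : hist p k.+1 = h ++ (if p k is Some m then m :: nil else nil) by [].
    have S : hsub h (hist p k.+1) by rewrite Hk1 => x Hx; apply: in_or_app; left.
    apply: (@final_at k (f 1) Ok); right.
    split.
      rewrite Hk1 => /inapp [//|]; case E': (p k) => [mm|] //= [Em|//].
      by subst mm; apply: (bob_notA Ok Dk E').
    apply: (@fam_of _ _ _ (consf (f 0) (consf (f 2) (ext g1 (f 0))))).
      rewrite h3; apply: consf_inj; [apply: consf_inj|].
      + exact: ext_inj.
      + apply: (@ext_P _ _ _ (fun x => x <> f 2)) => x; have [_ np] := g1P x.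
        exact: (offpath (m2 : 1 < minlen h) np).2.
      + apply: (@consf_P (fun x => x <> f 0)) => //; first by move=> E'; apply: n02; rewrite E'.
        apply: (@ext_P _ _ _ (fun x => x <> f 0)) => x; have [_ np] := g1P x.
        exact: (offpath (m2 : 1 < minlen h) np).1.
    rewrite h3; apply: (@consf_P (fun x => adj (f 1) x /\ emarked (hist p k.+1) (f 1) x)).
      by split; [apply: adj_sym; apply: fa; exact: ltnW | apply: em_sub S _; apply: emarked_sym].
    apply: (@consf_P (fun x => adj (f 1) x /\ emarked (hist p k.+1) (f 1) x)); first by split; [apply: fa; rewrite E2|apply: em_sub S _].
    apply: (@ext_P _ _ _ (fun x => adj (f 1) x /\ emarked (hist p k.+1) (f 1) x)) => x; have [a np] := g1P x; split => //; apply: em_sub S _.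
    have [o0 o2] := offpath (m2 : 1 < minlen h) np.
    by apply: contrapT => nm; apply: (nC (g1 x)).
have N2' : minlen h <> 2 by apply/eqP.
have [m3 [a12 nm12]] := min_gt2 Hf N2'.
rewrite actn2 // in Hs.
have bc : bob_can (hist p k) by exists (f 1), (f 2).
have [u [v [Pk Su]]] := bob_move Ok Dk bc.
rewrite -/h Hs in Su; case: Su => Eu Ev; subst u v.
have Hk1 : hist p k.+1 = h ++ (MB (f 1) (f 2) :: nil) by rewrite /= Pk.
have D1 : defined k.+1 by apply: defined_S => //; rewrite Pk.
have nv1' : ~ vmarked (hist p k.+1) (f 1) by rewrite Hk1 => /inapp [//|[]].
have Ok1 : ~~ odd k.+1 by rewrite /= Ok.
have [a [Pk1 na]] := alice_move Ok1 D1 (ex_intro _ (f 1) nv1').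
have D2 : defined k.+2 by apply: defined_S => //; rewrite Pk1.
have Ok2 : odd k.+2 by rewrite /= negbK.
have Hk2 : hist p k.+2 = (h ++ (MB (f 1) (f 2) :: nil)) ++ (MA a :: nil) by rewrite /= Pk Pk1.
have S : hsub h (hist p k.+2) by rewrite Hk2 => x Hx; apply: in_or_app; left; apply: in_or_app; left.
have em : emarked (hist p k.+2) (f 1) (f 2).
  by rewrite Hk2; left; apply: in_or_app; left; apply: in_or_app; right; left.
have vmh : forall x, vmarked (hist p k.+2) x -> vmarked h x \/ x = a.
  rewrite Hk2 => x /inapp [/inapp [H|[//|[]]]|[[->]|[]]]; by [left|right].
case: (pselect (a = f 1)) => [Ea|Na].
  apply: (IH (minlen h).-1 _ k.+2 (fun i => f i.+1) Ok2 D2); first by lia.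
  apply: nfp_shift Hf m3 S em _ => x /vmh [H|E']; [by left | by right; rewrite E'].
apply: (IH 2 _ k.+2 f Ok2 D2); first by lia.
apply: nfp_restrict2 Hf S em _ => /vmh [H|E'].
- exact: nv1 H.
- by apply: Na.
Qed.

End Play.

End Strat.

Lemma forces_wins : bob_forces_nfree G n -> bob_wins G (n + 3).
Proof.
move=> [sg0 [L W]]; exists (strat sg0); split; first exact: strat_legal.
move=> p vp cp.
case: (pselect (exists k, odd k /\ p k.-1 <> None /\ nfree_path (hist p k) n)) => [[k [Ok [Nk Hk]]]|NE].
  have Dk : defined p k.
    move=> j Hj Ej; apply: Nk; apply: (none_prop vp Ej).
    have k0 : 0 < k by case: (posnP k) Ok => [->|].
    lia.
  have [m [f Hf]] := (nfreeE (hist p k)).1 Hk.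
  exact: (main_ind vp cp Ok Dk Hf).
exfalso.
have cp0 : consistent sg0 p.
  move=> k u v Ok Ek.
  have Nk : p k.-1 <> None.
    move=> E; move: Ek; rewrite (none_prop vp E (leq_pred k)) //.
  rewrite -(cp _ _ _ Ok Ek) strat_none //.
  by move=> H; apply: NE; exists k; split => //; split => //; apply/(nfreeE _).
have [k [Ok [Nk Hk]]] := W p vp cp0.
by apply: NE; exists k.
Qed.


End Game2.

Lemma vscore_mono (G : sgraph) h (v : G) s s' : (s' <= s)%N -> vscore_ge h v s -> vscore_ge h v s'.
Proof.
move=> le [s0|[nv [f [fi fP]]]].
  by left; subst s; apply/eqP; rewrite -leqn0.
right; split=> //; exists (fun i : 'I_s' => f (widen_ord le i)); split.
  by move=> i j /fi /(congr1 val) /= /val_inj.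
by move=> i; apply: fP.
Qed.

Lemma bob_wins_mono (G : sgraph) s s' : (s' <= s)%N -> bob_wins G s -> bob_wins G s'.
Proof.
move=> le [sg [L W]]; exists sg; split=> // p vp cp.
have [r [v H]] := W p vp cp; exists r, v; exact: vscore_mono H.
Qed.

Section ColE.
Local Open Scope ereal_scope.
Lemma col_iff (G : sgraph) (n : nat) :
  ((((n + 4)%N%:R)%R : Rdefinitions.R)%:E <= col_ve G) <-> bob_wins G (n + 3).
Proof.
rewrite /col_ve; set S := (X in ereal_sup X).
split.
- move=> H.
  have Hlt : ((n + 2)%N%:R%R : Rdefinitions.R)%:E < ereal_sup S.
    move: H; case: (ereal_sup S) => [r| |] //=; last by rewrite ltry.
    rewrite !lee_fin !lte_fin => H.
    have : ((n+4)%N%:R = (n+2)%N%:R + 2 :> Rdefinitions.R)%R.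
      by rewrite -[in LHS](addn2 2) addnA natrD.
    move=> E; rewrite E in H; lra.
  have [y [s Ss <-]] := ereal_sup_gt Hlt.
  rewrite lte_fin ltr_nat => lt2.
  apply: (@bob_wins_mono G s); last exact: Ss.
  by move: lt2; rewrite addn3 addn2.
- move=> B.
  have : ((n + 3)%N%:R%R : Rdefinitions.R)%:E <= ereal_sup S.
    by apply: ereal_sup_ubound; exists (n+3)%N.
  have E : ((n + 4)%N%:R%R : Rdefinitions.R)%:E = ((n + 3)%N%:R%R : Rdefinitions.R)%:E + 1.
    by rewrite -EFinD addn4 -addn3 -natr1.
  rewrite E => H; by rewrite leeD2r.
Qed.
End ColE.

Theorem corollary5p3 (G : sgraph) (n : nat) :
  ((((n + 4)%N%:R)%R : Rdefinitions.R)%:E <= col_ve G)%E <-> bob_forces_nfree G n.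
Proof.
rewrite col_iff; split; [exact: wins_forces | exact: forces_wins].
Qed.
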